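(* Let $E$ be a Banach $f$-algebra and let $(x_\alpha)_{\alpha\in A}$, $(y_\beta)_{\beta\in B}$ be nets in $E$ with $x_\alpha\xrightarrow{mw}x$ and $y_\beta\xrightarrow{mw}y$. Then the nets $(x_\alpha\vee y_\beta)_{(\alpha,\beta)\in A\times B}$ and $(x_\alpha\wedge y_\beta)_{(\alpha,\beta)\in A\times B}$ $mw$-converge to $x\vee y$ and $x\wedge y$, respectively.
   Context: All vector lattices are real and Archimedean. An $f$-algebra is a vector lattice with an associative multiplication making it an algebra, such that products of positive elements are positive and $x\wedge y=0$ implies $(xz)\wedge y=(zx)\wedge y=0$ for all $z\ge0$. A Banach $f$-algebra is an $f$-algebra which is a Banach lattice with $\|xy\|\le\|x\|\|y\|$. A net $(x_\alpha)$ in $E$ $mw$-converges to $x$ ($x_\alpha\xrightarrow{mw}x$) if $|x_\alpha-x|u\to0$ weakly for every $u\in E_+$. $A\times B$ is directed componentwise. *)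

(* Defs.v *)
From HB Require Import structures.
From mathcomp Require Import all_boot all_order all_algebra.
From mathcomp Require Import all_classical all_reals topology normedtype.
Set Implicit Arguments. Unset Strict Implicit. Unset Printing Implicit Defensive.
Import Order.TTheory GRing.Theory Num.Theory.
Import numFieldNormedType.Exports.
Local Open Scope ring_scope.

Record banach_falgebra (R : realType) (E : completeNormedModType R) := BFA {
  le : E -> E -> Prop;
  join : E -> E -> E;
  meet : E -> E -> E;
  mul : E -> E -> E;
  le_refl : forall x, le x x;
  le_trans : forall x y z, le x y -> le y z -> le x z;
  le_anti : forall x y, le x y -> le y x -> x = y;
  le_add : forall x y z, le x y -> le (x + z) (y + z);
  le_scale : forall (a : R) x y, 0 <= a -> le x y -> le (a *: x) (a *: y);
  join_ub_l : forall x y, le x (join x y);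
  join_ub_r : forall x y, le y (join x y);
  join_least : forall x y z, le x z -> le y z -> le (join x y) z;
  meet_lb_l : forall x y, le (meet x y) x;
  meet_lb_r : forall x y, le (meet x y) y;
  meet_greatest : forall x y z, le z x -> le z y -> le z (meet x y);
  archimedean : forall x y, le 0 x -> (forall n : nat, le (n%:R *: x) y) -> x = 0;
  mulA : forall x y z, mul x (mul y z) = mul (mul x y) z;
  mulDl : forall x y z, mul (x + y) z = mul x z + mul y z;
  mulDr : forall x y z, mul x (y + z) = mul x y + mul x z;
  mulZl : forall (a : R) x y, mul (a *: x) y = a *: mul x y;
  mulZr : forall (a : R) x y, mul x (a *: y) = a *: mul x y;
  mul_ge0 : forall x y, le 0 x -> le 0 y -> le 0 (mul x y);
  f_prop : forall x y z, meet x y = 0 -> le 0 z ->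
    meet (mul x z) y = 0 /\ meet (mul z x) y = 0;
  lattice_norm : forall x y, le (join x (- x)) (join y (- y)) -> `|x| <= `|y|;
  norm_mul : forall x y, `|mul x y| <= `|x| * `|y|
}.

Definition labs (R : realType) (E : completeNormedModType R)
  (F : banach_falgebra E) (x : E) : E := join F x (- x).

Definition directed (A : Type) (leA : A -> A -> Prop) : Prop :=
  [/\ (exists a : A, True), (forall a, leA a a),
      (forall a b c, leA a b -> leA b c -> leA a c) &
      (forall a b, exists c, leA a c /\ leA b c)].

Definition prod_le (A B : Type) (leA : A -> A -> Prop) (leB : B -> B -> Prop)
  (p q : A * B) : Prop := leA p.1 q.1 /\ leB p.2 q.2.

Definition net_cvg (R : realType) (A : Type) (leA : A -> A -> Prop)
  (r : A -> R) (l : R) : Prop :=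
  forall eps : R, 0 < eps -> exists a0 : A, forall a, leA a0 a -> `|r a - l| < eps.

Definition cont_lin_functional (R : realType) (E : completeNormedModType R)
  (f : E -> R) : Prop :=
  (forall (a : R) (u v : E), f (a *: u + v) = a * f u + f v) /\ continuous f.

Definition weak_cvg (R : realType) (E : completeNormedModType R) (A : Type)
  (leA : A -> A -> Prop) (z : A -> E) (l : E) : Prop :=
  forall f : E -> R, cont_lin_functional f -> net_cvg leA (fun a => f (z a)) (f l).

Definition mw_cvg (R : realType) (E : completeNormedModType R)
  (F : banach_falgebra E) (A : Type) (leA : A -> A -> Prop) (xn : A -> E) (x : E) : Prop :=
  forall u : E, le F 0 u -> weak_cvg leA (fun a => mul F (labs F (xn a - x)) u) 0.

(* Main.v *)
Require Import Defs.
From mathcomp Require Import all_boot all_order all_algebra.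
From mathcomp Require Import all_classical all_reals topology normedtype.
From HB Require Import structures.
From mathcomp Require Import lra.
Set Implicit Arguments. Unset Strict Implicit. Unset Printing Implicit Defensive.
Import Order.TTheory GRing.Theory Num.Theory.
Import numFieldNormedType.Exports.
Local Open Scope ring_scope.


Section Lat.
Variables (R : realType) (E : completeNormedModType R) (F : banach_falgebra E).
Local Notation lef := (le F).
Local Notation jn := (Defs.join F).
Local Notation mt := (Defs.meet F).

Lemma leT x y z : lef x y -> lef y z -> lef x z.
Proof. exact: Defs.le_trans. Qed.

Lemma le_addl x y z : lef x y -> lef (z + x) (z + y).
Proof. by move=> h; rewrite ![z + _]addrC; apply: le_add. Qed.

Lemma le_sub0 x y : lef x y -> lef 0 (y - x).
Proof. by move=> h; have := le_add (- x) h; rewrite subrr. Qed.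

Lemma le_sub0' x y : lef 0 (y - x) -> lef x y.
Proof. by move=> h; have := le_add x h; rewrite add0r subrK. Qed.

Lemma le_opp x y : lef x y -> lef (- y) (- x).
Proof. by move=> /le_sub0 h; apply: le_sub0'; rewrite opprK addrC. Qed.

Lemma le_D x y z w : lef x y -> lef z w -> lef (x + z) (y + w).
Proof. move=> h1 h2; apply: (leT (le_add z h1)); exact: le_addl. Qed.

Lemma le_moveL p q s : lef p (q + s) -> lef (p - q) s.
Proof. by move=> h; have := le_add (- q) h; rewrite addrAC subrr add0r. Qed.

Lemma le_moveR p q s : lef (p - q) s -> lef p (s + q).
Proof. by move=> h; have := le_add q h; rewrite subrK. Qed.

Lemma le_subr p q s : lef (p + q) s -> lef p (s - q).
Proof. by move=> h; have := le_add (- q) h; rewrite addrK. Qed.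

Lemma le_addr p q s : lef p (s - q) -> lef (p + q) s.
Proof. by move=> h; have := le_add q h; rewrite subrK. Qed.

Lemma le_subl p q s : lef p (s + q) -> lef (p - q) s.
Proof. by move=> h; have := le_add (- q) h; rewrite addrK. Qed.

Lemma le_addl' p q s : lef (p - q) s -> lef p (s + q).
Proof. by move=> h; have := le_add q h; rewrite subrK. Qed.

Lemma join_add x y z : jn (x + z) (y + z) = jn x y + z.
Proof.
apply: Defs.le_anti.
  by apply: join_least; apply: le_add; [apply: join_ub_l | apply: join_ub_r].
apply: le_addr; apply: join_least; apply: le_subr;
  [apply: join_ub_l|apply: join_ub_r].
Qed.

Lemma meet_add x y z : mt (x + z) (y + z) = mt x y + z.
Proof.
apply: Defs.le_anti; last first.
  by apply: meet_greatest; apply: le_add; [apply: meet_lb_l | apply: meet_lb_r].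
apply: le_addl'; apply: meet_greatest; apply: le_subl;
  [apply: meet_lb_l|apply: meet_lb_r].
Qed.

Lemma opp_meet x y : - mt x y = jn (- x) (- y).
Proof.
apply: Defs.le_anti.
  rewrite -[jn _ _]opprK; apply: le_opp; apply: meet_greatest;
  rewrite -[X in lef _ X]opprK; apply: le_opp; [apply: join_ub_l|apply: join_ub_r].
by apply: join_least; apply: le_opp; [apply: meet_lb_l|apply: meet_lb_r].
Qed.

Lemma join_C x y : jn x y = jn y x.
Proof.
by apply: Defs.le_anti; apply: join_least; (apply: join_ub_l || apply: join_ub_r).
Qed.

Lemma join_meet x y : jn x y + mt x y = x + y.
Proof.
have : jn (- x) (- y) + (x + y) = jn y x.
  by rewrite -join_add addrA addNr add0r addrCA addNr addr0.
by rewrite -opp_meet join_C => <-; rewrite addrC addNKr.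
Qed.

Local Notation lab := (labs F).

Lemma pp_np x : jn x 0 - jn (- x) 0 = x.
Proof.
rewrite -[X in jn (- x) X]oppr0 -opp_meet opprK join_meet addr0 //.
Qed.

Lemma labs_ge0 x : lef 0 (lab x).
Proof.
have h : lef (x + - x) (lab x + lab x) by apply: le_D; [apply: join_ub_l|apply: join_ub_r].
rewrite subrr -mulr2n -scaler_nat in h.
have := le_scale (a := 2^-1) (ltW _) h.
rewrite scaler0 scalerA mulVf ?scale1r; last by rewrite pnatr_eq0.
by apply; rewrite invr_gt0 ltr0n.
Qed.

Lemma le0_opp x : lef 0 x -> lef (- x) 0.
Proof. by move=> h; rewrite -oppr0; apply: le_opp. Qed.

Lemma labs_pos x : lef 0 x -> lab x = x.
Proof.
move=> h; apply: Defs.le_anti; last exact: join_ub_l.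
apply: join_least; first exact: Defs.le_refl.
exact: leT (le0_opp h) h.
Qed.

Lemma labsN x : lab (- x) = lab x.
Proof. by rewrite /labs opprK join_C. Qed.

Lemma pp_le x : lef (jn x 0) (lab x).
Proof. apply: join_least; [exact: join_ub_l| exact: labs_ge0]. Qed.

Lemma np_le x : lef (jn (- x) 0) (lab x).
Proof. apply: join_least; [exact: join_ub_r| exact: labs_ge0]. Qed.

Lemma pp_ge0 x : lef 0 (jn x 0).
Proof. exact: join_ub_r. Qed.

Lemma norm_mono x y : lef 0 y -> lef y x -> `|y| <= `|x|.
Proof.
move=> h0 h; apply: (@lattice_norm _ _ F).
by have := labs_pos h0; have := labs_pos (leT h0 h); rewrite /labs => -> ->.
Qed.

Lemma norm_pp x : `|jn x 0| <= `|x|.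
Proof.
apply: (@lattice_norm _ _ F); have := labs_pos (pp_ge0 x); rewrite /labs => ->; exact: pp_le.
Qed.

Lemma norm_np x : `|jn (- x) 0| <= `|x|.
Proof.
apply: (@lattice_norm _ _ F); have := labs_pos (pp_ge0 (- x)); rewrite /labs => ->; exact: np_le.
Qed.

Lemma le_labs x : lef x (lab x).
Proof. exact: join_ub_l. Qed.

Lemma le_labs_sub a c : lef a (c + lab (a - c)).
Proof. by rewrite addrC; apply: le_addl'; apply: le_labs. Qed.

Lemma labs_le z s : lef z s -> lef (- z) s -> lef (lab z) s.
Proof. exact: join_least. Qed.

Lemma labs_sub_le_ge0 a b : lef 0 (lab a + b) -> True. Proof. by []. Qed.

Lemma le_sum_l p q : lef 0 q -> lef p (p + q).
Proof. by move=> h; rewrite -[X in lef X _]addr0; apply: le_addl. Qed.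

Lemma le_sum_r p q : lef 0 p -> lef q (p + q).
Proof. by move=> h; rewrite -[X in lef X _]add0r; apply: le_add. Qed.

Lemma birk_join a b c d :
  lef (lab (jn a b - jn c d)) (lab (a - c) + lab (b - d)).
Proof.
have key : forall a b c d, lef (jn a b - jn c d) (lab (a - c) + lab (b - d)).
  move=> a' b' c' d'; apply: le_subl; rewrite addrC -join_add; apply: join_least.
  - apply: leT (le_labs_sub a' c') _; apply: leT _ (join_ub_l F _ _).
    apply: le_addl; apply: le_sum_l; exact: labs_ge0.
  - apply: leT (le_labs_sub b' d') _; apply: leT _ (join_ub_r F _ _).
    apply: le_addl; apply: le_sum_r; exact: labs_ge0.
apply: labs_le; first exact: key.
rewrite opprB -(labsN (a - c)) -(labsN (b - d)) !opprB; exact: key.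
Qed.

Lemma birk_meet a b c d :
  lef (lab (mt a b - mt c d)) (lab (a - c) + lab (b - d)).
Proof.
have key : forall a b c d, lef (mt c d - mt a b) (lab (a - c) + lab (b - d)).
  move=> a' b' c' d'; apply: le_subl; rewrite addrC -meet_add; apply: meet_greatest.
  - apply: leT (meet_lb_l F _ _) _; apply: leT (le_labs_sub c' a') _.
    rewrite -opprB labsN; apply: le_addl; apply: le_sum_l; exact: labs_ge0.
  - apply: leT (meet_lb_r F _ _) _; apply: leT (le_labs_sub d' b') _.
    rewrite -opprB labsN; apply: le_addl; apply: le_sum_r; exact: labs_ge0.
apply: labs_le; last by rewrite opprB; exact: key.
rewrite -(labsN (a - c)) -(labsN (b - d)) !opprB; exact: key.
Qed.

Local Notation ml := (Defs.mul F).

Lemma mul_opp p u : ml (- p) u = - ml p u.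
Proof. by rewrite -scaleN1r mulZl scaleN1r. Qed.

Lemma mul_mono u p q : lef 0 u -> lef p q -> lef (ml p u) (ml q u).
Proof.
move=> hu h; apply: le_sub0'; rewrite -mul_opp -mulDl; apply: mul_ge0 => //.
exact: le_sub0.
Qed.

End Lat.


Section Lin.
Variables (R : realType) (E : completeNormedModType R).

Definition islin (g : E -> R) := forall (a : R) (u v : E), g (a *: u + v) = a * g u + g v.

Lemma lin0 g : islin g -> g 0 = 0.
Proof. move=> h; have := h 1 0 0; rewrite scale1r addr0 mul1r; lra. Qed.

Lemma linD g : islin g -> forall u v, g (u + v) = g u + g v.
Proof. by move=> h u v; rewrite -[u]scale1r h mul1r scale1r. Qed.

Lemma linZ g : islin g -> forall a u, g (a *: u) = a * g u.
Proof. by move=> h a u; rewrite -[a *: u]addr0 h lin0 // addr0. Qed.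

Lemma linN g : islin g -> forall u, g (- u) = - g u.
Proof. by move=> h u; rewrite -scaleN1r linZ // mulN1r. Qed.

Lemma linB g : islin g -> forall u v, g (u - v) = g u - g v.
Proof. by move=> h u v; rewrite linD // linN. Qed.

Lemma lin_bound_cont (g : E -> R) K : islin g ->
  (forall x, `|g x| <= K * `|x|) -> continuous g.
Proof.
move=> hl hb x; apply/cvgrPdist_lt => eps e0; apply/nbhs_normP.
have hK : 0 < `|K| + 1 by rewrite ltr_wpDl.
exists (eps / (`|K| + 1)); first by rewrite /= divr_gt0.
move=> t /= ht.
rewrite -linB //.
have h1 : `|x - t| * (`|K| + 1) < eps by rewrite -ltr_pdivlMr.
have h2 := hb (x - t).
have h3 : K <= `|K| by apply: ler_norm.
have h4 : 0 <= `|x - t| by [].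
nra.
Qed.

Lemma clf_bound (f : E -> R) : cont_lin_functional f ->
  exists M, 0 < M /\ forall y, `|f y| <= M * `|y|.
Proof.
move=> [hl hc].
have := hc 0; move=> /cvgr_dist_lt /(_ 1 ltr01) /nbhs_normP [e /= e0 He].
exists (2 / e); split; first by rewrite divr_gt0.
move=> y; have [->|y0] := eqVneq y 0.
  by rewrite (lin0 hl) normr0 normr0 mulr0.
have ny : 0 < `|y| by rewrite normr_gt0.
pose k := e / (2 * `|y|).
have k0 : 0 < k by rewrite divr_gt0 // mulr_gt0.
have hk2 : k * (2 * `|y|) = e by rewrite /k divfK // mulf_neq0 // gt_eqF.
have hk : `|k *: y| < e.
  rewrite normrZ gtr0_norm //; nra.
have := He (k *: y); rewrite /ball_ /= sub0r normrN => /(_ hk).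
rewrite (lin0 hl) sub0r normrN -[k *: y]addr0 hl (lin0 hl) addr0 normrM gtr0_norm // => h.
rewrite mulrAC ler_pdivlMr //; nra.
Qed.

End Lin.


Section Pos.
Variables (R : realType) (E : completeNormedModType R) (F : banach_falgebra E).
Variables (f : E -> R) (hl : islin f) (M : R) (hM0 : 0 < M)
  (hM : forall y, `|f y| <= M * `|y|).
Local Notation lef := (le F).
Local Notation jn := (Defs.join F).
Local Notation mt := (Defs.meet F).

Definition Iset x := [set r : R | exists y, [/\ lef 0 y, lef y x & r = f y]]%classic.
Definition P x := sup (Iset x).

Lemma Iset_sup x : lef 0 x -> has_sup (Iset x).
Proof.
move=> hx; split; first by exists 0, 0; split => //; [exact: Defs.le_refl| rewrite (lin0 hl)].
exists (M * `|x|) => r [y [h0 h1 ->]].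
apply: le_trans (ler_norm _) _; apply: le_trans (hM y) _.
by apply: ler_wpM2l; [exact: ltW | exact: norm_mono h0 h1].
Qed.

Lemma P_ub x y : lef 0 y -> lef y x -> f y <= P x.
Proof.
move=> h0 h1; apply: sup_upper_bound; first exact: Iset_sup (leT h0 h1).
by exists y.
Qed.

Lemma P_le x c : lef 0 x -> (forall y, lef 0 y -> lef y x -> f y <= c) -> P x <= c.
Proof.
move=> hx h; apply: ge_sup; first by exists 0, 0; split => //; [exact: Defs.le_refl| rewrite (lin0 hl)].
by move=> r [y [h0 h1 ->]]; apply: h.
Qed.

Lemma P_ge0 x : lef 0 x -> 0 <= P x.
Proof. by move=> hx; rewrite -(lin0 hl); apply: P_ub => //; exact: Defs.le_refl. Qed.

Lemma P_bound x : lef 0 x -> P x <= M * `|x|.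
Proof.
move=> hx; apply: P_le => // y h0 h1.
apply: le_trans (ler_norm _) _; apply: le_trans (hM y) _.
by apply: ler_wpM2l; [exact: ltW | exact: norm_mono h0 h1].
Qed.

Lemma P_add a b : lef 0 a -> lef 0 b -> P (a + b) = P a + P b.
Proof.
move=> ha hb; have hab : lef 0 (a + b) by rewrite -[0]addr0; apply: le_D.
apply/eqP; rewrite eq_le; apply/andP; split.
  apply: P_le => // y h0 h1.
  have e : y = mt y a + (y - mt y a) by rewrite addrC subrK.
  have g1 : lef 0 (mt y a) by apply: meet_greatest.
  have g2 : lef (mt y a) a by apply: meet_lb_r.
  have g3 : lef 0 (y - mt y a) by apply: le_sub0; apply: meet_lb_l.
  have g4 : lef (y - mt y a) b.
    rewrite addrC opp_meet -join_add addNr; apply: join_least => //.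
    by rewrite addrC; apply: le_subl; rewrite addrC.
  rewrite e (linD hl); apply: lerD; exact: P_ub.
have : forall y1, lef 0 y1 -> lef y1 a -> f y1 <= P (a + b) - P b.
  move=> y1 h0 h1.
  suff : P b <= P (a + b) - f y1 by lra.
  apply: P_le => // y2 g0 g1.
  suff : f (y1 + y2) <= P (a + b) by rewrite (linD hl); lra.
  by apply: P_ub; [rewrite -[0]addr0; apply: le_D | apply: le_D].
move=> /(P_le ha); lra.
Qed.

Lemma P0 : P 0 = 0.
Proof.
apply/eqP; rewrite eq_le P_ge0 ?andbT; last exact: Defs.le_refl.
apply: P_le; first exact: Defs.le_refl.
by move=> y h0 h1; rewrite (Defs.le_anti h1 h0) (lin0 hl).
Qed.

Lemma P_scale c x : 0 <= c -> lef 0 x -> P (c *: x) = c * P x.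
Proof.
move=> c0 hx; have [->|cn0] := eqVneq c 0; first by rewrite scale0r P0 mul0r.
have cp : 0 < c by rewrite lt_def cn0.
have hcx : lef 0 (c *: x) by rewrite -(scaler0 _ c); apply: le_scale.
apply/eqP; rewrite eq_le; apply/andP; split.
  apply: P_le => // y h0 h1.
  have -> : y = c *: (c^-1 *: y) by rewrite scalerA divff // scale1r.
  rewrite (linZ hl) ler_pM2l //; apply: P_ub.
    by rewrite -(scaler0 _ c^-1); apply: le_scale; rewrite ?invr_ge0.
  have ic : 0 <= c^-1 by rewrite invr_ge0 ltW.
  have := le_scale ic h1.
  by rewrite scalerA mulVf // scale1r.
rewrite -ler_pdivlMl //.
apply: P_le => // y h0 h1.
rewrite ler_pdivlMl // -(linZ hl); apply: P_ub.
  by rewrite -(scaler0 _ c); apply: le_scale.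
exact: le_scale.
Qed.
End Pos.


Section Qs.
Variables (R : realType) (E : completeNormedModType R) (F : banach_falgebra E).
Variables (f : E -> R) (hl : islin f) (M : R) (hM0 : 0 < M)
  (hM : forall y, `|f y| <= M * `|y|).
Local Notation lef := (le F).
Local Notation jn := (Defs.join F).
Local Notation PP := (P F f).

Definition Q x := PP (jn x 0) - PP (jn (- x) 0).

Lemma lef0 : lef 0 0. Proof. exact: Defs.le_refl. Qed.

Lemma Q_diff a b : lef 0 a -> lef 0 b -> Q (a - b) = PP a - PP b.
Proof.
move=> ha hb; rewrite /Q; set d := a - b.
have e : jn d 0 + b = a + jn (- d) 0.
  by rewrite -{1}(subrK (jn (- d) 0) (jn d 0)) pp_np /d addrAC subrK.
have hp := pp_ge0 F d; have hn := pp_ge0 F (- d).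
have := congr1 PP e; rewrite !(P_add hl hM0 hM) //; lra.
Qed.

Lemma Q_pos x : lef 0 x -> Q x = PP x.
Proof. by move=> hx; have := Q_diff hx lef0; rewrite subr0 (P0 F hl hM0 hM) subr0. Qed.

Lemma Q_add x y : Q (x + y) = Q x + Q y.
Proof.
have e : x + y = (jn x 0 + jn y 0) - (jn (- x) 0 + jn (- y) 0).
  by rewrite opprD addrACA !pp_np.
have hpx := pp_ge0 F x; have hpy := pp_ge0 F y.
have hnx := pp_ge0 F (- x); have hny := pp_ge0 F (- y).
rewrite e Q_diff; try by rewrite -[X in lef X _]addr0; apply: le_D.
rewrite !(P_add hl hM0 hM) // /Q; lra.
Qed.

Lemma Q_opp x : Q (- x) = - Q x.
Proof.
have e : - x = jn (- x) 0 - jn x 0 by rewrite -opprB pp_np.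
rewrite e Q_diff; [rewrite /Q; lra | exact: pp_ge0 | exact: pp_ge0].
Qed.

Lemma Q_scale_pos c x : 0 <= c -> Q (c *: x) = c * Q x.
Proof.
move=> c0; have e : c *: x = c *: jn x 0 - c *: jn (- x) 0 by rewrite -scalerBr pp_np.
have h1 : lef 0 (c *: jn x 0) by rewrite -[X in lef X _](scaler0 _ c); apply: le_scale => //; exact: pp_ge0.
have h2 : lef 0 (c *: jn (- x) 0) by rewrite -[X in lef X _](scaler0 _ c); apply: le_scale => //; exact: pp_ge0.
rewrite e Q_diff // !(P_scale hl hM0 hM) //; try exact: pp_ge0. rewrite /Q; lra.
Qed.

Lemma Q_lin : islin Q.
Proof.
move=> a u v; rewrite Q_add; congr (_ + _).
have [a0|a0] := leP 0 a; first exact: Q_scale_pos.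
have -> : a *: u = - ((- a) *: u) by rewrite scaleNr opprK.
rewrite Q_opp Q_scale_pos; [lra | lra].
Qed.

Lemma Q_bound x : `|Q x| <= (M + M) * `|x|.
Proof.
have hp := pp_ge0 F x; have hn := pp_ge0 F (- x).
have b1 := P_bound hl hM0 hM hp; have b2 := P_bound hl hM0 hM hn.
have g1 := P_ge0 hl hM0 hM hp; have g2 := P_ge0 hl hM0 hM hn.
have n1 : M * `|jn x 0| <= M * `|x| by apply: ler_wpM2l; [exact: ltW| exact: norm_pp].
have n2 : M * `|jn (- x) 0| <= M * `|x| by apply: ler_wpM2l; [exact: ltW| exact: norm_np].
rewrite /Q ler_norml; apply/andP; split; lra.
Qed.

Definition G x := Q x - f x.

Lemma G_lin : islin G.
Proof. by move=> a u v; rewrite /G Q_lin hl; lra. Qed.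

Lemma G_bound x : `|G x| <= (M + M + M) * `|x|.
Proof.
have := Q_bound x; have := hM x; rewrite /G.
have := ler_normB (Q x) (f x); lra.
Qed.

Lemma dom_ineq z w : lef 0 z -> lef z w -> - G w <= f z <= Q w.
Proof.
move=> h0 h1; have hw := leT h0 h1.
apply/andP; split; last by rewrite Q_pos //; exact: (P_ub hl hM0 hM).
have gpos : forall y, lef 0 y -> 0 <= G y.
  by move=> y hy; rewrite /G Q_pos // subr_ge0; apply: (P_ub hl hM0 hM) => //; exact: Defs.le_refl.
have := gpos _ (le_sub0 h1); rewrite (linB G_lin).
have := Q_pos h0; have := P_ge0 hl hM0 hM h0; rewrite /G; lra.
Qed.
End Qs.


Section Nets.
Variables (R : realType) (E : completeNormedModType R).

Lemma dom_weak (F : banach_falgebra E) (C : Type) (leC : C -> C -> Prop)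
  (z w : C -> E) : directed leC ->
  (forall c, le F 0 (z c) /\ le F (z c) (w c)) ->
  weak_cvg leC w 0 -> weak_cvg leC z 0.
Proof.
move=> [_ _ htr hup] hzw hw f hf eps e0.
have hl : islin f := hf.1.
have [M [M0 hM]] := clf_bound hf.
have cQ : cont_lin_functional (Q F f).
  split; first exact: (Q_lin F hl M0 hM).
  exact: lin_bound_cont (Q_lin F hl M0 hM) (Q_bound F hl M0 hM).
have cG : cont_lin_functional (G F f).
  split; first exact: (G_lin F hl M0 hM).
  exact: lin_bound_cont (G_lin F hl M0 hM) (G_bound F hl M0 hM).
have [c1 h1] := hw _ cQ eps e0.
have [c2 h2] := hw _ cG eps e0.
have [c [l1 l2]] := hup c1 c2.
exists c => c' hc.
have := h1 c' (htr _ _ _ l1 hc); have := h2 c' (htr _ _ _ l2 hc).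
rewrite (lin0 (Q_lin F hl M0 hM)) (lin0 (G_lin F hl M0 hM)) (lin0 hl) !subr0.
have [hz1 hz2] := hzw c'.
have /andP[d1 d2] := dom_ineq hl M0 hM hz1 hz2.
move=> /ltr_normlP [a1 a2] /ltr_normlP [b1 b2].
apply/ltr_normlP; split; lra.
Qed.

Lemma weak_fst (A B : Type) (leA : A -> A -> Prop) (leB : B -> B -> Prop)
  (v : A -> E) : directed leB -> weak_cvg leA v 0 ->
  weak_cvg (prod_le leA leB) (fun p => v p.1) 0.
Proof.
move=> [[b0 _] _ _ _] hv f hf eps e0; have [a0 h] := hv f hf eps e0.
by exists (a0, b0) => p [hp _]; exact: h.
Qed.

Lemma weak_snd (A B : Type) (leA : A -> A -> Prop) (leB : B -> B -> Prop)
  (v : B -> E) : directed leA -> weak_cvg leB v 0 ->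
  weak_cvg (prod_le leA leB) (fun p => v p.2) 0.
Proof.
move=> [[a0 _] _ _ _] hv f hf eps e0; have [b0 h] := hv f hf eps e0.
by exists (a0, b0) => p [_ hp]; exact: h.
Qed.

Lemma weak_add (C : Type) (leC : C -> C -> Prop) (v w : C -> E) :
  directed leC -> weak_cvg leC v 0 -> weak_cvg leC w 0 ->
  weak_cvg leC (fun c => v c + w c) 0.
Proof.
move=> [_ _ htr hup] hv hw f hf eps e0.
have hl : islin f := hf.1.
have e2 : 0 < eps / 2 by rewrite divr_gt0.
have [c1 h1] := hv f hf _ e2; have [c2 h2] := hw f hf _ e2.
have [c [l1 l2]] := hup c1 c2.
exists c => c' hc.
have := h1 c' (htr _ _ _ l1 hc); have := h2 c' (htr _ _ _ l2 hc).
rewrite (lin0 hl) !subr0 (linD hl).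
move=> /ltr_normlP [a1 a2] /ltr_normlP [b1 b2].
apply/ltr_normlP; split; lra.
Qed.

Lemma prod_directed (A B : Type) (leA : A -> A -> Prop) (leB : B -> B -> Prop) :
  directed leA -> directed leB -> directed (prod_le leA leB).
Proof.
move=> [[a0 _] ra ta ua] [[b0 _] rb tb ub]; split.
- by exists (a0, b0).
- by move=> p; split.
- by move=> p q r [h1 h2] [h3 h4]; split; [exact: ta h1 h3 | exact: tb h2 h4].
- move=> p q; have [a [l1 l2]] := ua p.1 q.1; have [b [l3 l4]] := ub p.2 q.2.
  by exists (a, b); split; split.
Qed.
End Nets.

Theorem proposition2p6 (R : realType) (E : completeNormedModType R)
  (F : banach_falgebra E)
  (A : Type) (leA : A -> A -> Prop) (B : Type) (leB : B -> B -> Prop)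
  (hA : directed leA) (hB : directed leB)
  (xn : A -> E) (yn : B -> E) (x y : E) :
  mw_cvg F leA xn x -> mw_cvg F leB yn y ->
  mw_cvg F (prod_le leA leB) (fun p => join F (xn p.1) (yn p.2)) (join F x y) /\
  mw_cvg F (prod_le leA leB) (fun p => meet F (xn p.1) (yn p.2)) (meet F x y).
Proof.
move=> hx hy; have hd := prod_directed hA hB.
have hw : forall u, le F 0 u -> weak_cvg (prod_le leA leB)
    (fun p => Defs.mul F (labs F (xn p.1 - x)) u + Defs.mul F (labs F (yn p.2 - y)) u) 0.
  move=> u hu; exact: (weak_add hd (weak_fst hB (hx u hu)) (weak_snd hA (hy u hu))).
split => u hu; apply: dom_weak hd _ (hw u hu) => p; split.
- by apply: mul_ge0 => //; exact: labs_ge0.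
- rewrite -mulDl; apply: mul_mono => //; exact: birk_join.
- by apply: mul_ge0 => //; exact: labs_ge0.
- rewrite -mulDl; apply: mul_mono => //; exact: birk_meet.
Qed.
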